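(* Let $q$ be a prime power, $m$ a positive integer with $m\ne 2$, $n=q^{2m}-1$, and $\delta$ an integer with $2\le\delta\le n$. The primitive, narrow-sense BCH code $\mathcal{BCH}(n,q^2;\delta)$ over $\mathbf{F}_{q^2}$ contains its Hermitian dual code if and only if $$\delta\le\delta_{\max}=q^{m+[m\text{ even}]}-1-(q^2-2)[m\text{ even}].$$
   Context: For a prime power $Q$ and integer $M\ge1$, let $\alpha$ be a primitive element of $\mathbf{F}_{Q^M}$, $n=Q^M-1$, and $C_x=\{xQ^k\bmod n\mid k\in\mathbf{Z}\}$ the $Q$-ary cyclotomic coset of $x$ modulo $n$. For $2\le\delta\le n$, $\mathcal{BCH}(n,Q;\delta)$ is the cyclic code of length $n$ over $\mathbf{F}_Q$ with generator polynomial $\prod_{z\in Z}(x-\alpha^z)$, $Z=C_1\cup\cdots\cup C_{\delta-1}$. Here $Q=q^2$, $M=m$. The Hermitian dual of $C\subseteq\mathbf{F}_{q^2}^n$ is $C^{\perp_h}=\{y\mid y^q\cdot x=0\ \forall x\in C\}$ with $y^q=(y_1^q,\dots,y_n^q)$. Iverson notation: $[P]=1$ if $P$ holds and $0$ otherwise. *)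

(* Defs.v *)
From HB Require Import structures.
From mathcomp Require Import all_boot all_order all_algebra all_field.
From mathcomp Require Import boolp.
Set Implicit Arguments. Unset Strict Implicit. Unset Printing Implicit Defensive.
Import GRing.Theory.
Local Open Scope ring_scope.

(* q-ary cyclotomic coset membership: z \in C_x (mod n), with Q the field size.
   k ranges over nat; since Q^M = 1 mod n this is the same as k ranging over Z. *)
Definition in_cyc_coset (n Q x z : nat) : Prop :=
  exists k : nat, z = ((x * Q ^ k) %% n)%N.

Definition in_bch_defset (n Q delta z : nat) : Prop :=
  exists2 x : nat, (1 <= x <= delta.-1)%N & in_cyc_coset n Q x z.

Definition bch_genpoly (L : fieldType) (n Q delta : nat) (alpha : L) : {poly L} :=
  \prod_(z < n | `[< in_bch_defset n Q delta z >]) ('X - (alpha ^+ z)%:P).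

(* The cyclic code of length n over K generated by the generator polynomial g:
   codewords c correspond to polynomials c(x) = sum c_i x^i of degree < n
   that are multiples of g (g | x^n - 1, so this is the ideal generated by g). *)
Definition bch_code (K L : fieldType) (iota : {rmorphism K -> L})
    (n Q delta : nat) (alpha : L) (c : 'rV[K]_n) : Prop :=
  bch_genpoly n Q delta alpha %| \sum_(i < n) (iota (c ord0 i))%:P * 'X^i.

Definition herm_dual (K : fieldType) (n q : nat) (C : 'rV[K]_n -> Prop)
    (y : 'rV[K]_n) : Prop :=
  forall x : 'rV[K]_n, C x -> \sum_(i < n) (y ord0 i) ^+ q * x ord0 i = 0.

Definition prime_power (q : nat) : Prop :=
  exists p k : nat, [/\ prime p, (0 < k)%N & q = (p ^ k)%N].

Definition delta_max (q m : nat) : nat :=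
  (q ^ (m + ~~ odd m) - 1 - (q ^ 2 - 2) * ~~ odd m)%N.

Arguments bch_code {K L} iota n Q delta alpha c.
Arguments herm_dual {K} n q C y.
Arguments bch_genpoly {L} n Q delta alpha.

(* Main.v *)
Require Import Defs.
From HB Require Import structures.
From mathcomp Require Import all_boot all_order all_algebra all_field.
From mathcomp Require Import boolp zify.
Import GRing.Theory.

Set Implicit Arguments. Unset Strict Implicit. Unset Printing Implicit Defensive.

Lemma split_hi (q m t : nat) : m < t -> t < 2 * m ->
  [/\ q ^ (2 * m-t) * q ^ (t-m) = q ^ m, q ^ m * q ^ (t-m) = q ^ t & q ^ (2 * m-t) * q ^ t = q ^ (2 * m)].
Proof.
move=> h1 h2; rewrite -!expnD; split; congr (_ ^ _); lia.
Qed.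

Lemma core_odd (q m t x y : nat) : 1 < q -> t < 2 * m ->
  0 < y -> x <= q ^ m - 2 -> y <= q ^ m - 2 -> ~~ ((q ^ (2 * m)).-1 %| y + x * q ^ t).
Proof.
move=> q1 t2 y0 hx hy; apply/negP => hd.
have hpos : 0 < y + x * q ^ t by lia.
have hS := dvdn_leq hpos hd.
have m0 : 0 < m by lia.
have w2 : 2 <= q ^ m by apply: (leq_trans q1); rewrite -{1}(expn1 q) leq_pexp2l //; lia.
have e2m : q ^ (2 * m) = q ^ m * q ^ m by rewrite -expnD addnn -mul2n.
case: (leqP t m) => htm.
- have : q ^ t <= q ^ m by rewrite leq_pexp2l //; lia.
  move=> hu; have := leq_mul hx hu; move: hS; rewrite e2m.
  set w := q ^ m in w2 hx hy *; set u := q ^ t in hu *.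
  have : (w - 2) * w = w * w - 2 * w by rewrite mulnBl.
  lia.
- have [e1 e2 e3] := split_hi q htm t2.
  set P := q ^ (2 * m-t) in e1 e3 *; set v := q ^ (t-m) in e1 e2 *; set u := q ^ t in e2 e3 hS hd *.
  set w := q ^ m in e1 e2 w2 e2m hx hy *.
  have v2 : q <= v by rewrite /v -{1}(expn1 q) leq_pexp2l // ?subn_gt0 // ltnW.
  have P0 : 0 < P by rewrite /P expn_gt0 ltnW.
  have hx' := divn_eq x P; have hb := ltn_pmod x P0.
  set a := x %/ P in hx'; set b := x %% P in hx' hb.
  have ha : a < v. rewrite ltnNge; apply/negP=> hav. have : a * P >= v * P by rewrite leq_mul2r hav orbT. lia.
  rewrite -e3 in hd; set N := (P * u).-1 in hd.
  have Pu0 : 0 < P * u by rewrite muln_gt0 P0 /u expn_gt0; lia.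
  have eN : P * u = N + 1 by rewrite /N; lia.
  have e4 : y + x * u = (y + a + b * u) + a * N.
    rewrite hx' mulnDl -mulnA eN; lia.
  rewrite e4 dvdn_addl ?dvdn_mull // in hd.
  have hS' := dvdn_leq (_ : 0 < y + a + b * u) hd.
  have hb' : (P - b) * u + b * u = P * u by rewrite -mulnDl subnK // ltnW.
  have hPb : 1 <= P - b by lia.
  have hu : u <= (P - b) * u by rewrite leq_pmull.
  have h5 : w + v <= w * v + 1 by clear -w2 v2 q1; nia.
  have hpos2 : 0 < y + a + b * u by lia.
  move: (hS' hpos2) => hS2; clear hS' hd e4 hS hpos e3 e2m.
  rewrite -e2 in hu; lia.
Qed.

Lemma core_even (q m t x y : nat) : 1 < q -> ~~ odd m -> 0 < m -> odd t -> t < 2 * m ->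
  0 < y -> x <= q ^ (m.+1) - q ^ 2 -> y <= q ^ (m.+1) - q ^ 2 ->
  ~~ ((q ^ (2 * m)).-1 %| y + x * q ^ t).
Proof.
move=> q1 em m0 ot t2 y0 hx hy; apply/negP => hd.
have m2 : 2 <= m by case: m em m0 {t2 hx hy hd} => [|[|m']].
have q0 : 0 < q by lia.
set r := q ^ (m.-1).
have ew : q ^ m = q * r by rewrite /r -expnS prednK.
have ew1 : q ^ (m.+1) = q * q * r by rewrite expnS ew mulnA.
have r1 : q <= r by rewrite /r -{1}(expn1 q) leq_pexp2l //; lia.
have e2m : q ^ (2 * m) = (q * r) * (q * r) by rewrite -ew -expnD addnn -mul2n.
rewrite ew1 in hx hy.
have e22 : q ^ 2 = q * q by rewrite expnS expn1.
rewrite e22 in hx hy.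
case: (leqP t m) => htm.
- have htm' : t <= m.-1 by case: (t =P m) ot em => [->|/eqP hne] ; [move=> -> | lia].
  have hu : q ^ t <= r by rewrite leq_pexp2l.
  have h1 := leq_mul hx hu.
  have hpos : 0 < y + x * q ^ t by lia.
  have hS := dvdn_leq hpos hd; rewrite e2m in hS.
  set u := q ^ t in h1 hS hu hd hpos.
  have e5 : (q * q * r - q * q) * r = (q * r) * (q * r) - q * q * r by rewrite mulnBl; congr (_ - _); rewrite -!mulnA; congr (_ * _); rewrite mulnCA.
  rewrite e5 in h1.
  have : q * q <= q * q * r by rewrite leq_pmulr //; lia.
  have : 1 < q * q by nia.
  have : q * q * r <= (q * r) * (q * r) by clear -r1 q1; nia.
  clear -hS h1 hy; lia.
- have [e1 e2 e3] := split_hi q htm t2.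
  rewrite ew in e1 e2.
  set P := q ^ (2 * m-t) in e1 e3 *; set v := q ^ (t-m) in e1 e2 *; set u := q ^ t in e2 e3 hd *.
  have v2 : q <= v by rewrite /v -{1}(expn1 q) leq_pexp2l //; lia.
  have P0 : 0 < P by rewrite /P expn_gt0 q0.
  have hx' := divn_eq x P; have hb := ltn_pmod x P0.
  set a := x %/ P in hx'; set b := x %% P in hx' hb.
  have ha : a < q * v.
    rewrite ltnNge; apply/negP=> hav. have : a * P >= q * v * P by rewrite leq_mul2r hav orbT.
    have : q * v * P = q * (q * r) by rewrite -mulnA (mulnC v) e1.
    move: hx'; have : q * (q * r) = q * q * r by rewrite mulnA. lia.
  rewrite -e3 in hd; set N := (P * u).-1 in hd.
  have Pu0 : 0 < P * u by rewrite muln_gt0 P0 /u expn_gt0 q0.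
  have eN : P * u = N + 1 by rewrite /N; lia.
  have e4 : y + x * u = (y + a + b * u) + a * N.
    rewrite hx' mulnDl -mulnA eN; lia.
  rewrite e4 dvdn_addl ?dvdn_mull // in hd.
  have hpos2 : 0 < y + a + b * u by lia.
  have hS2 := dvdn_leq hpos2 hd.
  have hb' : (P - b) * u + b * u = P * u by rewrite -mulnDl subnK // ltnW.
  have hPb : 1 <= P - b by lia.
  have hu : u <= (P - b) * u by rewrite leq_pmull.
  clear e4 hd.
  case: (t - m =P 1) => htm1.
  + have vq : v = q by rewrite /v htm1 expn1.
    have Pr : P = r.
      have e7 : P * q = r * q by rewrite [r * q]mulnC -e1 vq.
      by apply/eqP; rewrite -(eqn_pmul2r q0); apply/eqP.
    rewrite vq Pr in e2 ha hu hb' hb hx'; rewrite Pr in hPb.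
    have eu : u = q * q * r by rewrite -e2 mulnAC.
    have hPb1 : r - b = 1.
      have : (r - b) * u <= 1 * u by lia.
      rewrite leq_mul2r => /orP [u0|]; last by lia.
      by move: Pu0; rewrite (eqP u0) muln0.
    have ha2 : q * q - 1 <= a by lia.
    have := leq_mul ha2 (leqnn r).
    rewrite mulnBl mul1n.
    have : r <= q * q * r by rewrite leq_pmull // muln_gt0 q0.
    lia.
  + have v3 : q * q <= v.
      rewrite -e22 /v leq_pexp2l //; lia.
    have w3 : q * q <= q * r by rewrite leq_mul2l r1 orbT.
    have h6 : q * (q * r) + q * v < (q * r) * v + q * q by clear -v3 w3 q1; nia.
    rewrite -e2 in hu. lia.
Qed.

Definition nn q m := (q ^ (2 * m)).-1.
Definition Bad q m d := exists x y j,
  [/\ 0 < x < d, 0 < y < d & nn q m %| y + x * q ^ (2 * j+1)].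

Lemma red_exp q m k y x : 1 < q -> 0 < m ->
  (nn q m %| y + x * q ^ k) = (nn q m %| y + x * q ^ (k %% (2 * m))).
Proof.
move=> q1 m0; rewrite /dvdn.
have n1 : 1 < nn q m.
  rewrite /nn; have : q ^ 1 < q ^ (2 * m) by rewrite ltn_exp2l //; lia. rewrite expn1; lia.
have e1 : q ^ (2 * m) %% nn q m = 1.
  have e0 : q ^ (2 * m) = nn q m + 1.
    have : 0 < q ^ (2 * m) by rewrite expn_gt0; lia.
    rewrite /nn; lia.
  by rewrite e0 modnDl modn_small.
have hk : q ^ k %% nn q m = q ^ (k %% (2 * m)) %% nn q m.
  by rewrite {1}(divn_eq k (2 * m)) expnD (mulnC (k %/ _)) expnM -modnMml -modnXm e1 exp1n modnMml mul1n.
by rewrite -modnDmr -modnMmr hk modnMmr modnDmr.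
Qed.

Lemma noBad q m d : 1 < q -> 0 < m -> d <= delta_max q m -> ~ Bad q m d.
Proof.
move=> q1 m0 hd [x [y [j [/andP[x0 xd] /andP[y0 yd] hdv]]]].
rewrite red_exp // in hdv.
set t := (2 * j+1) %% (2 * m) in hdv.
have t2 : t < 2 * m by rewrite ltn_pmod //; lia.
have ot : odd t.
  have := divn_eq (2 * j+1) (2 * m); rewrite -/t => e.
  have : odd (2 * j+1) = odd ((2 * j+1) %/ (2 * m) * (2 * m)) (+) odd t by rewrite {1}e oddD.
  by rewrite oddD !oddM /= andbF.
have q2 : q ^ 2 <= q ^ m.+1 by rewrite leq_pexp2l //; lia.
move: hd; rewrite /delta_max; case: (boolP (odd m)) => om /= hd.
- rewrite addn0 muln0 subn0 in hd.
  have hx : x <= q ^ m - 2 by lia.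
  have hy : y <= q ^ m - 2 by lia.
  exact: (negP (core_odd q1 t2 y0 hx hy) hdv).
- rewrite addn1 muln1 in hd.
  have hx : x <= q ^ m.+1 - q ^ 2 by lia.
  have hy : y <= q ^ m.+1 - q ^ 2 by lia.
  exact: (negP (core_even q1 om m0 ot t2 y0 hx hy) hdv).
Qed.

Lemma yesBad q m d : 1 < q -> 0 < m -> m != 2 -> delta_max q m < d -> Bad q m d.
Proof.
move=> q1 m0 m2; rewrite /delta_max; case: (boolP (odd m)) => om /= hd.
- rewrite addn0 muln0 subn0 in hd.
  have w2 : 2 <= q ^ m by apply: (leq_trans q1); rewrite -{1}(expn1 q) leq_pexp2l //; lia.
  exists (q ^ m - 1), (q ^ m - 1), m./2; split; try (apply/andP; split; lia).
  have -> : 2 * m./2 + 1 = m by rewrite -[in RHS](odd_double_half m) om addnC mul2n.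
  have e : q ^ (2 * m) = q ^ m * q ^ m by rewrite -expnD addnn -mul2n.
  rewrite /nn e.
  have -> : q ^ m - 1 + (q ^ m - 1) * q ^ m = (q ^ m * q ^ m).-1.
    rewrite mulnBl mul1n; set w := q ^ m in w2 *.
    have : w <= w * w by rewrite leq_pmull //; lia.
    lia.
  exact: dvdnn.
- rewrite addn1 muln1 in hd.
  have m4 : 4 <= m by case: m m0 m2 om {hd} => [|[|[|[|m']]]].
  set r := q ^ (m.-2).
  have ew1 : q ^ (m.+1) = q * q * (q * r).
    have em : m.+1 = (m.-2).+3 by lia.
    by rewrite em /r !expnS; nia.
  have e2m : q ^ (2 * m) = q * q * (q * r) * (q * r).
    have em : 2 * m = (m.-2).+3 + (m.-2).+1 by lia.
    by rewrite em expnD !expnS /r; nia.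
  have e22 : q ^ 2 = q * q by rewrite expnS expn1.
  rewrite ew1 e22 in hd.
  have r1 : q * q <= q * r.
    by rewrite /r -expnS -e22 leq_pexp2l //; lia.
  have qq : 4 <= q * q by nia.
  have hh : q * q <= q * q * (q * r) by rewrite leq_pmulr //; lia.
  set R := q * r in r1 hh ew1 e2m hd.
  exists (q * q * R - q * q + 1), (q * q * R - R - 1), (m.-2)./2; split; try (apply/andP; split; nia).
  have -> : 2 * (m.-2)./2 + 1 = m.-1.
    have : ~~ odd m.-2.
      have em : m = (m.-2).+2 by lia.
      by move: om; rewrite {1}em /= negbK.
    move=> om2; have := odd_double_half m.-2; rewrite (negbTE om2) add0n -mul2n; lia.
  have -> : q ^ (m.-1) = R by rewrite /R /r -expnS; congr (_ ^ _); lia.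
  rewrite /nn e2m.
  have -> : q * q * R - R - 1 + (q * q * R - q * q + 1) * R = (q * q * R * R).-1.
    have : R <= q * q * R by rewrite leq_pmull //; lia.
    have : (q * q * R - q * q + 1) * R = q * q * R * R - q * q * R + R.
      rewrite mulnDl mulnBl mul1n; have : q * q * R <= q * q * R * R by rewrite leq_pmulr //; lia. lia.
    have : q * q * R <= q * q * R * R by rewrite leq_pmulr //; lia.
    have : 0 < R by rewrite /R muln_gt0 /r expn_gt0; lia.
    have : 3 * R <= q * q * R by rewrite leq_mul2r; lia.
    lia.
  exact: dvdnn.
Qed.


Lemma defset_lt N Q d z : (0 < N)%N -> in_bch_defset N Q d z -> (z < N)%N.
Proof. by move=> N0 [x _ [kk ->]]; rewrite ltn_mod. Qed.

Lemma nn_gt1 q m : 1 < q -> 0 < m -> 1 < nn q m.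
Proof.
move=> q1 m0; rewrite /nn; have : q ^ 1 < q ^ (2 * m) by rewrite ltn_exp2l //; lia.
rewrite expn1; lia.
Qed.

Lemma nn_eq q m : 1 < q -> q ^ (2 * m) = nn q m + 1.
Proof. move=> q1; have : 0 < q ^ (2 * m) by rewrite expn_gt0; lia. rewrite /nn; lia. Qed.

Lemma ZB q m d z w j : 1 < q -> 0 < m ->
  in_bch_defset (nn q m) (q ^ 2) d z -> in_bch_defset (nn q m) (q ^ 2) d w ->
  nn q m %| q * z * (q ^ 2) ^ j + w -> Bad q m d.
Proof.
move=> q1 m0 [x hx [a ->]] [yy hy [b ->]] hd.
have N1 := nn_gt1 q1 m0; have eN := nn_eq m q1.
set N := nn q m in hd N1 eN *; set Q := q ^ 2 in hd *.
have ea := divn_eq (x * Q ^ a) N; have eb := divn_eq (yy * Q ^ b) N.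
set ua := (x * Q ^ a) %/ N in ea; set za := (x * Q ^ a) %% N in ea hd.
set ub := (yy * Q ^ b) %/ N in eb; set zb := (yy * Q ^ b) %% N in eb hd.
have h1 : N %| q * x * Q ^ (a + j) + yy * Q ^ b.
  have -> : q * x * Q ^ (a + j) + yy * Q ^ b = (q * za * Q ^ j + zb) + N * (q * ua * Q ^ j + ub).
    rewrite expnD mulnA -(mulnA q x) ea eb; clear; lia.
  by rewrite dvdn_addl // dvdn_mulr.
have hb := divn_eq ((N + 1) ^ b) N.
have hb1 : (N + 1) ^ b %% N = 1.
  by rewrite -modnXm modnDl (modn_small N1) exp1n modn_small.
rewrite hb1 in hb; set t := (N + 1) ^ b %/ N in hb.
have hQ : Q ^ b * Q ^ (b * m.-1) = (N + 1) ^ b.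
  rewrite -expnD -eN /Q -!expnM; congr (_ ^ _).
  have em : b * m = b * m.-1 + b by rewrite -mulnSr prednK.
  by rewrite -mulnA (mulnC m) em addnC.
have h2 : N %| (q * x * Q ^ (a + j) + yy * Q ^ b) * Q ^ (b * m.-1) by apply: dvdn_mulr.
have e3 : (q * x * Q ^ (a + j) + yy * Q ^ b) * Q ^ (b * m.-1) =
          (yy + x * q ^ (2 * (a + j + b * m.-1) + 1)) + N * (yy * t).
  rewrite mulnDl -mulnA -expnD -(mulnA yy) hQ hb.
  have -> : q ^ (2 * (a + j + b * m.-1) + 1) = q * Q ^ (a + j + b * m.-1).
    by rewrite addn1 expnS /Q -expnM.
  clear; lia.
rewrite e3 dvdn_addl ?dvdn_mulr // in h2.
exists x, yy, (a + j + b * m.-1); split => //; apply/andP; move/andP: hx; move/andP: hy; clear; lia.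
Qed.

Lemma ZA q m d x yy jj j : 1 < q -> 0 < m -> 0 < x < d -> yy <= nn q m ->
  nn q m %| yy + x * q ^ (2 * jj + 1) ->
  in_bch_defset (nn q m) (q ^ 2) d (((nn q m - yy) * q * (q ^ 2) ^ j) %% nn q m).
Proof.
move=> q1 m0 hx hy hd.
exists x; first by apply/andP; move/andP: hx; clear; lia.
exists (jj + 1 + j).
set N := nn q m in hd hy *; set Q := q ^ 2.
apply/eqP; rewrite -(eqn_modDr (yy * q * Q ^ j)).
have -> : (N - yy) * q * Q ^ j + yy * q * Q ^ j = N * (q * Q ^ j).
  by rewrite -!mulnA -mulnDl subnK.
have -> : x * Q ^ (jj + 1 + j) + yy * q * Q ^ j = (yy + x * q ^ (2 * jj + 1)) * (q * Q ^ j).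
  have ex : Q ^ (jj + 1 + j) = q ^ (2 * jj + 1) * (q * Q ^ j).
    by rewrite /Q -!expnM -expnS -expnD; congr (_ ^ _); clear; lia.
  rewrite ex; clear; lia.
by rewrite modnMr; move: hd => /dvdnP [c ->]; rewrite mulnAC modnMl.
Qed.

Lemma Zy N Q d yy : 0 < yy < d -> yy < N -> in_bch_defset N Q d yy.
Proof.
move=> /andP[h1 h2] h3; exists yy; first by apply/andP; lia.
by exists 0; rewrite expn0 muln1 modn_small.
Qed.

Local Open Scope ring_scope.

Section Alg.
Variables (p k q m : nat) (K L : finFieldType) (iota : {rmorphism K -> L}) (alpha : L).
Hypotheses (pp : prime p) (k0 : (0 < k)%N) (eq_q : q = (p ^ k)%N) (m0 : (0 < m)%N).
Hypotheses (cK : #|K| = (q ^ 2)%N) (cL : #|L| = (q ^ (2 * m))%N).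
Local Notation n := ((q ^ (2 * m)).-1).
Local Notation Q := (q ^ 2)%N.
Hypothesis prim : n.-primitive_root alpha.

Lemma pcharL : p \in [pchar L].
Proof. by apply: (@card_finPcharP L p (k * (2 * m))%N) => //; rewrite cL eq_q -expnM. Qed.

Lemma frobD e (x y : L) : (x + y) ^+ (p ^ e) = x ^+ (p ^ e) + y ^+ (p ^ e).
Proof.
apply: exprDn_pchar; rewrite pnatX; apply/orP; left.
by rewrite (eq_pnat _ (pcharf_eq pcharL)) pnat_id.
Qed.

Lemma frob_sum e (I : Type) (r : seq I) (P : pred I) (F : I -> L) :
  (\sum_(i <- r | P i) F i) ^+ (p ^ e) = \sum_(i <- r | P i) (F i) ^+ (p ^ e).
Proof.
apply: (big_morph (fun x => x ^+ (p ^ e))); first exact: frobD.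
by rewrite expr0n expn_eq0 eqn0Ngt prime_gt0.
Qed.

Lemma frob_sumT e (I : Type) (r : seq I) (F : I -> L) :
  (\sum_(i <- r) F i) ^+ (p ^ e) = \sum_(i <- r) (F i) ^+ (p ^ e).
Proof. exact: frob_sum. Qed.

Lemma qE : q = (p ^ k)%N. Proof. exact: eq_q. Qed.
Lemma QkE j : (Q ^ j = p ^ (k * 2 * j))%N. Proof. by rewrite eq_q -!expnM mulnA. Qed.
Lemma qQkE j : (q * Q ^ j = p ^ (k + k * 2 * j))%N. Proof. by rewrite QkE eq_q -expnD. Qed.

Lemma iotaQ (a : K) j : iota a ^+ (Q ^ j) = iota a.
Proof.
rewrite -rmorphXn; congr (iota _); elim: j => [|j IH]; first by rewrite expr1.
by rewrite expnS exprM -[X in _ ^+ X ^+ _]cK expf_card IH.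
Qed.

Lemma fixL (x : L) : x ^+ (Q ^ m) = x.
Proof. by rewrite -expnM -cL expf_card. Qed.

Lemma q1 : (1 < q)%N.
Proof. rewrite eq_q -{1}(expn0 p) ltn_exp2l ?prime_gt1 //. Qed.

Lemma fix_img (x : L) : x ^+ Q = x -> exists a, iota a = x.
Proof.
move=> hx; case: (pickP (fun a => iota a == x)) => [a /eqP ha|hn]; first by exists a.
exfalso.
pose P : {poly L} := 'X^Q - 'X.
have Q1 : (1 < Q)%N by rewrite -{1}(expn0 q) ltn_exp2l // q1.
have sP : size P = Q.+1 by rewrite size_polyDl ?size_polyXn // size_polyN size_polyX ltnS.
have P0 : P != 0 by rewrite -size_poly_eq0 sP.
have hall : all (root P) (x :: map iota (enum K)).
  rewrite /= {1}/root !hornerE hx subr_eq0 eqxx /=.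
  apply/allP => _ /mapP [a _ ->]; rewrite /root !hornerE.
  by have := iotaQ a 1; rewrite expn1 => ->; rewrite subrr.
have hu : uniq (x :: map iota (enum K)).
  rewrite /= map_inj_uniq ?enum_uniq ?andbT; last exact: fmorph_inj.
  by apply/mapP => [[a _ ea]]; move: (hn a); rewrite -ea eqxx.
have := max_poly_roots P0 hall hu.
by rewrite sP /= size_map -cardE cK ltnn.
Qed.

Lemma natn : n%:R = - 1 :> L.
Proof.
have h : (#|L|%:R = 0 :> L).
  have e0 : (0 < k * (2 * m))%N by rewrite muln_gt0 k0 muln_gt0 m0.
  by rewrite cL eq_q -expnM natrX (pcharf0 pcharL) expr0n eqn0Ngt e0.
apply/eqP; rewrite -subr_eq0 opprK -(natrD _ n 1) addn1 prednK -?cL ?h //.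
by rewrite ?cL expn_gt0 ltnW ?q1.
Qed.


Lemma n_gt0 : (0 < n)%N. Proof. exact: prim_order_gt0 prim. Qed.

Lemma Q1 : (1 < Q)%N. Proof. by rewrite -{1}(expn0 q) ltn_exp2l // q1. Qed.

Lemma geom j : \sum_(i < n) (alpha ^+ j) ^+ i = if (n %| j)%N then n%:R else 0.
Proof.
case: ifP => hd.
- have -> : alpha ^+ j = 1.
    by rewrite -(expr_mod _ (prim_expr_order prim)); move: hd; rewrite /dvdn => /eqP ->.
  by rewrite (eq_bigr (fun _ => 1)) => [|i _]; rewrite ?expr1n // sumr_const card_ord.
- have hr : alpha ^+ j - 1 != 0.
    rewrite subr_eq0 -(expr0 alpha) (eq_prim_root_expr prim).
    by move: hd; rewrite /dvdn mod0n => ->.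
  have := subrX1 (alpha ^+ j) n.
  rewrite -exprM mulnC exprM (prim_expr_order prim) expr1n subrr => /esym/eqP.
  by rewrite mulf_eq0 (negbTE hr) /= => /eqP.
Qed.

Lemma trace_nz (P : pred nat) : P 0%N -> exists b : L, \sum_(j < m | P j) b ^+ (Q ^ j) != 0.
Proof.
move=> P0.
pose pol : {poly L} := \sum_(j < m | P j) 'X^(Q ^ j).
have ev b : pol.[b] = \sum_(j < m | P j) b ^+ (Q ^ j).
  by rewrite horner_sum; apply: eq_bigr => j _; rewrite hornerXn.
case: (pickP (fun b => pol.[b] != 0)) => [b hb|hn]; first by exists b; rewrite -ev.
exfalso.
have c1 : pol`_1 = 1.
  rewrite coef_sum (bigD1 (Ordinal m0)) //= coefXn expn0 eqxx big1 ?addr0 // => j /andP[_ hj].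
  rewrite coefXn; case: eqP => // /esym/eqP; rewrite -{2}(expn0 Q) eqn_exp2l ?Q1 // => /eqP hj0.
  by move: hj; rewrite -val_eqE /= hj0 eqxx.
have pol0 : pol != 0 by apply/eqP => h; move: c1; rewrite h coef0 => /eqP; rewrite eq_sym oner_eq0.
have sz : (size pol <= (Q ^ m.-1).+1)%N.
  apply/leq_sizeP => i hi; rewrite coef_sum big1 // => j _; rewrite coefXn; case: eqP => // hij.
  move: hi; rewrite hij => hi.
  have : (Q ^ j <= Q ^ m.-1)%N by rewrite leq_pexp2l ?(ltnW Q1) //; move: (ltn_ord j); lia.
  lia.
have hall : all (root pol) (enum L) by apply/allP => b _; apply/eqP; move/negbFE: (hn b) => /eqP.
have := max_poly_roots pol0 hall (enum_uniq _).
rewrite -cardE cL.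
have e : (q ^ (2 * m) = Q * Q ^ m.-1)%N by rewrite -expnS prednK // -expnM.
rewrite e => h; have := leq_ltn_trans (leq_trans h sz) (ltnSn _).
have : (2 * Q ^ m.-1 <= Q * Q ^ m.-1)%N by rewrite leq_mul2r Q1 orbT.
have : (0 < Q ^ m.-1)%N by rewrite expn_gt0 ltnW ?Q1.
lia.
Qed.

Definition Tr (b : L) (s i : nat) := \sum_(j < m) (b * alpha ^+ (s * i)) ^+ (Q ^ j).

Lemma trQ (v : L) : (\sum_(j < m) v ^+ (Q ^ j)) ^+ Q = \sum_(j < m) v ^+ (Q ^ j).
Proof.
have hQ : Q = (p ^ (k * 2))%N by rewrite eq_q -expnM.
rewrite [in LHS]hQ frob_sumT -hQ.
under eq_bigr do rewrite -exprM -expnSr.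
case: m m0 fixL => [//|m'] _ fx.
rewrite big_ord_recr big_ord_recl /= fx expn0 expr1 addrC; congr (_ + _).
Qed.

Lemma TrQ b s i : Tr b s i ^+ Q = Tr b s i. Proof. exact: trQ. Qed.

Lemma gen_sum b s w :
  \sum_(i < n) Tr b s i * (alpha ^+ w) ^+ i =
  n%:R * \sum_(j < m | (n %| s * Q ^ j + w)%N) b ^+ (Q ^ j).
Proof.
rewrite /Tr (eq_bigr (fun i : 'I_n => \sum_(j < m) (b * alpha ^+ (s * i)) ^+ (Q ^ j) * (alpha ^+ w) ^+ i)); last by move=> i _; rewrite mulr_suml.
rewrite exchange_big /= mulr_sumr [in RHS]big_mkcond /=; apply: eq_bigr => j _.
rewrite (eq_bigr (fun i : 'I_n => b ^+ (Q ^ j) * (alpha ^+ (s * Q ^ j + w)) ^+ i)); last first.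
  move=> i _; rewrite exprMn -mulrA; congr (_ * _); rewrite -!exprM -exprD; congr (_ ^+ _).
  by rewrite mulnDl mulnAC.
rewrite -mulr_sumr geom; case: ifP => _; last by rewrite !mulr0.
by rewrite mulrC.
Qed.


Definition pre (x : L) : K := odflt 0 [pick a | iota a == x].

Lemma preK x : x ^+ Q = x -> iota (pre x) = x.
Proof.
move=> hx; rewrite /pre; case: pickP => [a /eqP //|hn].
by have [a ha] := fix_img hx; move: (hn a); rewrite ha eqxx.
Qed.

Lemma hornerc (c : 'rV[K]_n) x :
  (\sum_(i < n) (iota (c ord0 i))%:P * 'X^i).[x] = \sum_(i < n) iota (c ord0 i) * x ^+ i.
Proof. by rewrite horner_sum; apply: eq_bigr => i _; rewrite hornerCM hornerXn. Qed.

Lemma code_iff d (c : 'rV[K]_n) : bch_code iota n Q d alpha c <->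
  (forall z, in_bch_defset n Q d z -> \sum_(i < n) iota (c ord0 i) * (alpha ^+ z) ^+ i = 0).
Proof.
rewrite /bch_code /bch_genpoly; split.
- move=> hdv z hz; have zn := defset_lt n_gt0 hz.
  have h1 : ('X - (alpha ^+ z)%:P) %| \prod_(z0 < n | `[< in_bch_defset n Q d z0 >]) ('X - (alpha ^+ z0)%:P).
    rewrite (bigD1 (Ordinal zn)) /=; last by apply/asboolP.
    exact: dvdp_mulIl.
  have := dvdp_trans h1 hdv; rewrite dvdp_XsubCl => /rootP.
  by rewrite hornerc.
- move=> hall.
  set P := (fun z0 : 'I_n => `[< in_bch_defset n Q d z0 >]).
  set rs := [seq alpha ^+ (val z0) | z0 <- [seq z1 <- index_enum 'I_n | P z1]].
  have hall' : all (root (\sum_(i < n) (iota (c ord0 i))%:P * 'X^i)) rs.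
    apply/allP => r0 /mapP [z0]; rewrite mem_filter => /andP[hz0 _] ->.
    by apply/rootP; rewrite hornerc; apply: hall; apply/asboolP.
  have hu : uniq_roots rs.
    rewrite uniq_rootsE map_inj_in_uniq ?filter_uniq ?index_enum_uniq //.
    move=> z1 z2 _ _ /eqP; rewrite (eq_prim_root_expr prim) !modn_small ?ltn_ord // => /eqP.
    exact: val_inj.
  have [r hr] := uniq_roots_prod_XsubC hall' hu.
  rewrite hr big_map big_filter; exact: dvdp_mull (dvdpp _).
Qed.


Lemma frobq_sum (F : 'I_m -> L) : (\sum_(j < m) F j) ^+ q = \sum_(j < m) F j ^+ q.
Proof. by rewrite eq_q frob_sumT. Qed.

Lemma iota_pre b s i : iota (pre (Tr b s i)) = Tr b s i.
Proof. by rewrite preK ?TrQ. Qed.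

Lemma dir1 d : ~ Bad q m d -> forall y : 'rV[K]_n,
  herm_dual n q (bch_code iota n Q d alpha) y -> bch_code iota n Q d alpha y.
Proof.
move=> nb y hy; apply/code_iff => z hz.
set Yz := \sum_(i < n) iota (y ord0 i) * (alpha ^+ z) ^+ i.
suff : Yz ^+ q = 0 by move/eqP; rewrite expf_eq0 => /andP[_ /eqP].
have key : forall b, \sum_(j < m) (b * Yz ^+ q) ^+ (Q ^ j) = 0.
  move=> b.
  pose c := \row_(i < n) pre (Tr b (q * z) i).
  have cc : bch_code iota n Q d alpha c.
    apply/code_iff => w hw.
    rewrite (eq_bigr (fun i : 'I_n => Tr b (q * z) i * (alpha ^+ w) ^+ i)); last first.
      by move=> i _; rewrite mxE iota_pre.
    rewrite gen_sum big1 ?mulr0 // => j hj; exfalso; apply: nb.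
    exact: (ZB q1 m0 hz hw hj).
  have := hy c cc.
  move/(congr1 iota); rewrite rmorph0 rmorph_sum /= => h.
  apply: (etrans _ h).
  rewrite (eq_bigr (fun i : 'I_n => \sum_(j < m) iota (y ord0 i) ^+ q * (b * alpha ^+ (q * z * i)) ^+ (Q ^ j))); last first.
    by move=> i _; rewrite rmorphM rmorphXn mxE iota_pre /Tr mulr_sumr.
  rewrite [in RHS]exchange_big /=; apply: eq_bigr => j _.
  rewrite exprMn -exprM (qQkE j) frob_sumT -(qQkE j) mulr_sumr; apply: eq_bigr => i _.
  rewrite exprMn (mulnC q) exprM iotaQ !exprMn mulrCA; congr (_ * (_ * _)).
  by rewrite -!exprM; congr (_ ^+ _); rewrite (mulnC (Q ^ j)%N) !mulnA (mulnC q); congr (_ * _); rewrite mulnAC.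
apply/eqP; apply: contraT => hu.
have [b0 hb0] := @trace_nz (fun _ => true) isT.
move: (key (b0 / Yz ^+ q)); rewrite mulfVK // => h.
by move: hb0; rewrite h eqxx.
Qed.

Lemma dir2 d : Bad q m d -> (d <= n)%N ->
  ~ (forall y : 'rV[K]_n,
      herm_dual n q (bch_code iota n Q d alpha) y -> bch_code iota n Q d alpha y).
Proof.
move=> [x [yy [jj [hx hyy hd]]]] hdn hall.
have yyn : (yy < n)%N by move/andP: hyy => [_ h]; exact: leq_trans h hdn.
set s := (n - yy)%N.
have hS0 : (n %| s * Q ^ 0 + yy)%N by rewrite expn0 muln1 subnK ?dvdnn // ltnW.
have [b hb] := @trace_nz (fun j => n %| s * Q ^ j + yy)%N hS0.
pose v := \row_(i < n) pre (Tr b s i).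
have hv : herm_dual n q (bch_code iota n Q d alpha) v.
  move=> c cc; apply: (fmorph_inj iota); rewrite rmorph0 rmorph_sum /=.
  rewrite (eq_bigr (fun i : 'I_n => \sum_(j < m) (b * alpha ^+ (s * i)) ^+ (Q ^ j * q) * iota (c ord0 i))); last first.
    move=> i _; rewrite rmorphM rmorphXn mxE iota_pre /Tr frobq_sum mulr_suml.
    by apply: eq_bigr => j _; rewrite -exprM.
  rewrite exchange_big /=; apply: big1 => j _.
  rewrite (eq_bigr (fun i : 'I_n => b ^+ (Q ^ j * q) * (iota (c ord0 i) * (alpha ^+ ((s * q * Q ^ j) %% n)) ^+ i))); last first.
    move=> i _; rewrite exprMn -mulrA; congr (_ * _); rewrite mulrC; congr (_ * _).
    rewrite (expr_mod _ (prim_expr_order prim)) -!exprM; congr (_ ^+ _).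
    by rewrite mulnAC (mulnC (Q ^ j)%N) mulnA.
  rewrite -mulr_sumr (iffLR (code_iff _ _) cc) ?mulr0 //.
  exact: (@ZA q m d x yy jj j q1 m0 hx (ltnW yyn) hd).
have := hall v hv; move/code_iff => /(_ yy (@Zy n Q d yy hyy yyn)).
rewrite (eq_bigr (fun i : 'I_n => Tr b s i * (alpha ^+ yy) ^+ i)); last first.
  by move=> i _; rewrite mxE iota_pre.
rewrite gen_sum natn mulN1r => /eqP; rewrite oppr_eq0 (negbTE hb).
done.
Qed.


Lemma main_sec d : m != 2%N -> (2 <= d <= n)%N ->
  (forall y : 'rV[K]_n, herm_dual n q (bch_code iota n Q d alpha) y -> bch_code iota n Q d alpha y)
  <-> (d <= delta_max q m)%N.
Proof.
move=> m2 /andP[d2 hdn]; split.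
- move=> H; rewrite leqNgt; apply/negP => hlt.
  exact: (dir2 (yesBad q1 m0 m2 hlt) hdn H).
- move=> hle; exact: (dir1 (noBad q1 m0 hle)).
Qed.

End Alg.

Unset Implicit Arguments. Set Strict Implicit. Set Printing Implicit Defensive.

Theorem mainTheorem3 (q m : nat) (K L : finFieldType)
    (iota : {rmorphism K -> L}) (alpha : L) (delta : nat) :
  prime_power q -> (0 < m)%N -> m != 2%N ->
  #|K| = (q ^ 2)%N -> #|L| = (q ^ (2 * m))%N ->
  (q ^ (2 * m)).-1.-primitive_root alpha ->
  (2 <= delta <= (q ^ (2 * m)).-1)%N ->
  (forall y : 'rV[K]_((q ^ (2 * m)).-1),
      herm_dual _ q (bch_code iota (q ^ (2 * m)).-1 (q ^ 2) delta alpha) y ->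
      bch_code iota (q ^ (2 * m)).-1 (q ^ 2) delta alpha y)
  <-> (delta <= delta_max q m)%N.
Proof.
move=> [p [k [pp k0 eq_q]]] m0 m2 cK cL prim hd.
exact: (@main_sec p k q m K L iota alpha pp k0 eq_q m0 cK cL prim delta m2 hd).
Qed.
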